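(* Let $\mathcal{G}=(\mathcal{V},\mathcal{E},\mathcal{W})$ be an undirected weighted graph (weights are nonzero reals, possibly negative) with $c$ connected components, and let $\mathcal{F}$ be a spanning forest of $\mathcal{G}$ with cycle subgraph $\mathcal{C}$. Then the weighted Laplacian $L(\mathcal{G})=EWE^T$ is similar to the block-diagonal matrix $$\begin{bmatrix} L_e(\mathcal{F})\, R_{(\mathcal{F},\mathcal{C})}\, W\, R_{(\mathcal{F},\mathcal{C})}^T & 0 \\ 0 & 0_{c\times c}\end{bmatrix},$$ where $R_{(\mathcal{F},\mathcal{C})}=\begin{bmatrix} I & L_e(\mathcal{F})^{-1}E_{\mathcal{F}}^TE_{\mathcal{C}}\end{bmatrix}$.
   Context: A weighted graph $\mathcal{G}=(\mathcal{V},\mathcal{E},\mathcal{W})$ has node set $\mathcal{V}$, edge set $\mathcal{E}$ and weight function $\mathcal{W}:\mathcal{E}\to\mathbb{R}\setminus\{0\}$; $W$ is the $|\mathcal{E}|\times|\mathcal{E}|$ diagonal matrix with $W_{kk}=w_k=\mathcal{W}(k)$. Each edge is given an arbitrary orientation, and the incidence matrix $E\in\mathbb{R}^{|\mathcal{V}|\times|\mathcal{E}|}$ has, in the column of edge $k=(i,j)$, entry $+1$ in row $i$, $-1$ in row $j$, and $0$ elsewhere. The weighted Laplacian is $L(\mathcal{G})=EWE^T$. A spanning forest $\mathcal{F}=(\mathcal{V},\mathcal{E}_{\mathcal{F}})$ is an acyclic subgraph with $|\mathcal{V}|-c$ edges containing a spanning tree of each connected component; the cycle subgraph is $\mathcal{C}=(\mathcal{V},\mathcal{E}\setminus\mathcal{E}_{\mathcal{F}})$.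 Edges are labeled so that $E=[E_{\mathcal{F}}\ E_{\mathcal{C}}]$ with $E_{\mathcal{F}}, E_{\mathcal{C}}$ the incidence matrices of $\mathcal{F}$ and $\mathcal{C}$, and $W$ is ordered accordingly. $L_e(\mathcal{F})=E_{\mathcal{F}}^TE_{\mathcal{F}}$ (the edge Laplacian of the forest), which is invertible since $E_{\mathcal{F}}$ has full column rank. *)

(* Defs.v *)
From HB Require Import structures.
From mathcomp Require Import all_boot all_order all_algebra.
Set Implicit Arguments. Unset Strict Implicit. Unset Printing Implicit Defensive.
Import Order.TTheory GRing.Theory Num.Theory.
Local Open Scope ring_scope.

(* A (multi)graph on node set 'I_n with edge set 'I_m: edge k joins
   nodes [eu k] and [ev k]; it is oriented from [eu k] to [ev k]. *)

Definition sub_adj (n m : nat) (eu ev : 'I_m -> 'I_n) (P : pred 'I_m) : rel 'I_n :=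
  fun i j => [exists k, P k && (((eu k == i) && (ev k == j)) ||
                                ((eu k == j) && (ev k == i)))].

Definition ncomp_graph (n m : nat) (eu ev : 'I_m -> 'I_n) : nat :=
  n_comp (sub_adj eu ev predT) predT.

Definition incidence (R : pzRingType) (n m : nat) (eu ev : 'I_m -> 'I_n)
  : 'M[R]_(n, m) :=
  \matrix_(i < n, k < m) (if i == eu k then 1 else if i == ev k then -1 else 0).

Definition weight_mx (R : pzRingType) (m : nat) (w : 'I_m -> R) : 'M[R]_m :=
  diag_mx (\row_k w k).

Definition laplacian (R : pzRingType) (n m : nat) (eu ev : 'I_m -> 'I_n)
  (w : 'I_m -> R) : 'M[R]_n :=
  incidence R eu ev *m weight_mx w *m (incidence R eu ev)^T.

(* The edges 'I_p (embedded as the first p edges of 'I_(p+q)) form a spanning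
   forest of the graph: acyclic (every forest edge is a bridge of the forest,
   i.e. its endpoints are not connected by the other forest edges), spanning
   every component (the endpoints of every graph edge are connected in the
   forest), and with |V| - c edges. *)
Definition is_forest_edge (p q : nat) (k : 'I_(p + q)) : bool := (k < p)%N.

Definition spanning_forest (n p q : nat) (eu ev : 'I_(p + q) -> 'I_n) : Prop :=
  [/\ forall k : 'I_p,
        ~~ connect (sub_adj eu ev (fun k' => (k' < p)%N && (k' != lshift q k)))
                   (eu (lshift q k)) (ev (lshift q k)),
      forall k : 'I_(p + q),
        connect (sub_adj eu ev (@is_forest_edge p q)) (eu k) (ev k)
    & p = (n - ncomp_graph eu ev)%N].

Definition similar_mx (R : comUnitRingType) (n k : nat) (A : 'M[R]_n) (B : 'M[R]_k)
  : Prop :=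
  exists e : k = n, exists P : 'M[R]_n,
    P \in unitmx /\ A = P *m castmx (e, e) B *m invmx P.

(* Main.v *)
Require Import Defs.
From HB Require Import structures.
From mathcomp Require Import all_boot all_order all_algebra.
Import Order.TTheory GRing.Theory Num.Theory.
Local Open Scope ring_scope.

Lemma inc_sum (R : pzRingType) n m (eu ev : 'I_m -> 'I_n) (g : 'I_n -> R) k :
  eu k != ev k ->
  \sum_i incidence R eu ev i k * g i = g (eu k) - g (ev k).
Proof.
move=> hk; rewrite (bigD1 (eu k)) //= (bigD1 (ev k)) /=; last by rewrite eq_sym.
rewrite big1 ?addr0.
  by rewrite !mxE eqxx eq_sym (negbTE hk) eqxx mul1r mulN1r.
by move=> i /andP[hi1 hi2]; rewrite mxE (negbTE hi2) (negbTE hi1) mul0r.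
Qed.

Lemma sumsq0 (R : realFieldType) m (y : 'rV[R]_m) : y *m y^T = 0 -> y = 0.
Proof.
move=> h; apply/rowP => i; rewrite [RHS]mxE.
have := congr1 (fun M : 'M[R]_1 => M 0 0) h; rewrite !mxE => hs.
have H : y 0 i * y^T i 0 = 0.
  apply: (psumr_eq0P (P := predT) (F := fun j => y 0 j * y^T j 0) _ hs) => //.
  by move=> j _; rewrite mxE sqr_ge0.
by move: H; rewrite mxE; move/eqP; rewrite mulf_eq0 orbb; move/eqP.
Qed.

Lemma gram_inj (R : realFieldType) m k (A : 'M[R]_(m, k)) (x : 'rV[R]_m) :
  x *m (A *m A^T) = 0 -> x *m A = 0.
Proof.
move=> h; apply: sumsq0.
by rewrite trmx_mul mulmxA -(mulmxA x) h mul0mx.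
Qed.

Lemma unit_of_inj (R : fieldType) m (A : 'M[R]_m) :
  (forall x : 'rV_m, x *m A = 0 -> x = 0) -> A \in unitmx.
Proof.
move=> h; rewrite -row_free_unit -kermx_eq0 -submx0.
apply/rV_subP => v /sub_kermxP /h ->; exact: sub0mx.
Qed.

Lemma connect_const (T : finType) (r : rel T) (U : Type) (f : T -> U) :
  (forall a b, r a b -> f a = f b) -> forall a b, connect r a b -> f a = f b.
Proof.
move=> hr a b /connectP [s hs ->]; elim: s a hs => [|x s IH] a //= /andP[h1 h2].
by rewrite (hr _ _ h1); apply: IH.
Qed.

Lemma sub_adj_sym n m (eu ev : 'I_m -> 'I_n) P : symmetric (sub_adj eu ev P).
Proof.
move=> a b; apply/existsP/existsP => [] [k /andP[hk h]]; exists k;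
  by rewrite hk /= orbC.
Qed.

Lemma forest_inj (R : realFieldType) n p q (eu ev : 'I_(p + q) -> 'I_n)
  (Hloop : forall k, eu k != ev k)
  (HF1 : forall k : 'I_p,
        ~~ connect (sub_adj eu ev (fun k' => (k' < p)%N && (k' != lshift q k)))
                   (eu (lshift q k)) (ev (lshift q k)))
  (x : 'rV[R]_p) : x *m (lsubmx (incidence R eu ev))^T = 0 -> x = 0.
Proof.
move=> hx; apply/rowP => k; rewrite [RHS]mxE.
set k' := lshift q k.
set rk := sub_adj eu ev (fun k'' => (k'' < p)%N && (k'' != k')).
pose g i : R := if connect rk (eu k') i then 1 else 0.
pose u : 'cV[R]_n := \col_i g i.
have hu : (lsubmx (incidence R eu ev))^T *m u = \col_j (j == k)%:R.
  apply/colP => j; rewrite !mxE.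
  under eq_bigr => i _ do rewrite !mxE.
  have h := @inc_sum R _ _ eu ev g (lshift q j) (Hloop _).
  rewrite [LHS](_ : _ = g (eu (lshift q j)) - g (ev (lshift q j))); last first.
    by rewrite -h; apply: eq_bigr => i _; rewrite mxE.
  case: (eqVneq j k) => [->|hjk].
    by rewrite /g connect0 (negbTE (HF1 k)) subr0.
  suff -> : g (eu (lshift q j)) = g (ev (lshift q j)) by rewrite subrr.
  have hr : rk (eu (lshift q j)) (ev (lshift q j)).
    apply/existsP; exists (lshift q j); rewrite !eqxx /= andbT ltn_ord /=.
    apply/eqP => /(congr1 val) /= /val_inj; exact/eqP.
  rewrite /g; congr (if _ then _ else _); apply/idP/idP => hc.
    exact: connect_trans hc (connect1 hr).
  by apply: connect_trans hc (connect1 _); rewrite /rk sub_adj_sym.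
have : x *m ((lsubmx (incidence R eu ev))^T *m u) = 0 by rewrite mulmxA hx mul0mx.
rewrite hu => /(congr1 (fun M : 'M[R]_1 => M 0 0)); rewrite !mxE (bigD1 k) //= big1.
  by rewrite !mxE eqxx mulr1 addr0.
by move=> j hj; rewrite mxE (negbTE hj) mulr0.
Qed.

Lemma forest_span (R : realFieldType) n p q (eu ev : 'I_(p + q) -> 'I_n)
  (Hloop : forall k, eu k != ev k)
  (HF2 : forall k : 'I_(p + q),
        connect (sub_adj eu ev (@is_forest_edge p q)) (eu k) (ev k))
  l (K : 'M[R]_(n, l)) :
  (lsubmx (incidence R eu ev))^T *m K = 0 ->
  (rsubmx (incidence R eu ev))^T *m K = 0.
Proof.
move=> hK; apply/matrixP => k l0; rewrite [RHS]mxE.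
pose g i := K i l0.
have edge j : g (eu j) - g (ev j) =
    \sum_i (incidence R eu ev) i j * K i l0 by rewrite (@inc_sum R _ _ eu ev g).
have hr : forall a b, sub_adj eu ev (@is_forest_edge p q) a b -> g a = g b.
  move=> a b /existsP [j /andP [hj h]].
  have ej : lshift q (Ordinal hj) = j by apply: val_inj.
  have := congr1 (fun M : 'M[R]_(p, l) => M (Ordinal hj) l0) hK.
  rewrite [LHS]mxE [RHS]mxE.
  under eq_bigr => i _ do rewrite [X in X * _]mxE [X in X * _]mxE.
  rewrite ej -(edge j) => /eqP; rewrite subr_eq0 => /eqP.
  case/orP: h => /andP [/eqP <- /eqP <-] //; by move->.
rewrite -[RHS](subrr (g (eu (rshift p k)))).
rewrite {2}(@connect_const _ _ _ g hr _ _ (HF2 (rshift p k))) edge.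
by rewrite mxE; apply: eq_bigr => i _; rewrite [X in X * _]mxE [X in X * _]mxE.
Qed.

Theorem proposition1 (R : realFieldType) (n p q c : nat)
  (eu ev : 'I_(p + q) -> 'I_n) (w : 'I_(p + q) -> R)
  (Hloop : forall k, eu k != ev k)
  (Hw : forall k, w k != 0)
  (Hc : c = ncomp_graph eu ev)
  (HF : spanning_forest eu ev) :
  let E := incidence R eu ev in
  let EF := lsubmx E in
  let EC := rsubmx E in
  let W := weight_mx w in
  let LeF := EF^T *m EF in
  let RFC := row_mx (1%:M : 'M[R]_p) (invmx LeF *m EF^T *m EC) in
  similar_mx (laplacian eu ev w)
    (block_mx (LeF *m RFC *m W *m RFC^T) (0 : 'M[R]_(p, c))
              (0 : 'M[R]_(c, p)) (0 : 'M[R]_(c, c))).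
Proof.
case: HF => HF1 HF2 Hp.
have hcn : (c <= n)%N.
  by rewrite Hc /ncomp_graph; apply: leq_trans (max_card _) _; rewrite card_ord.
have hn : (p + c = n)%N by rewrite Hp -Hc subnK.
subst n.
move=> E F C W L RFC.
have hL : L \in unitmx.
  apply: unit_of_inj => x hx; apply: (@forest_inj R _ _ _ eu ev Hloop HF1).
  by apply: gram_inj; rewrite trmxK.
have [T hT] : exists T, C = F *m T.
  have : (C^T <= F^T)%MS.
    by rewrite submxE; apply/eqP; apply: (@forest_span R _ _ _ eu ev Hloop HF2); exact: mulmx_coker.
  case/submxP => D hD; exists D^T.
  by rewrite -[C]trmxK hD trmx_mul trmxK.
have hE : E = F *m RFC.
  rewrite /RFC mul_mx_row mulmx1 -[LHS]hsubmxK; congr row_mx.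
  rewrite -/C {1}hT hT -!mulmxA [F^T *m (F *m T)]mulmxA -/L [invmx L *m _]mulmxA mulVmx //.
  by rewrite mul1mx.
have hrF : \rank F = p.
  apply/eqP; rewrite eqn_leq rank_leq_col /=.
  apply: (mulmx1_min_rank (M := invmx L *m F^T) (N := 1%:M)).
  by rewrite mulmx1 -mulmxA mulVmx.
have [K [hKF hKfree]] : exists K : 'M[R]_(c, p + c), K *m F = 0 /\ row_free K.
  have hr : \rank (kermx F) = c by rewrite mxrank_ker hrF addKn.
  have : (row_base (kermx F) <= kermx F)%MS by rewrite eq_row_base.
  move: (row_base (kermx F)) (row_base_free (kermx F)).
  rewrite hr => K0 hK0 /sub_kermxP hK0F.
  by exists K0.
have hKK : K *m K^T \in unitmx.
  apply: unit_of_inj => x hx; have := @gram_inj R _ _ K x hx.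
  by rewrite -(mul0mx _ K); apply: row_free_inj.
pose P := row_mx (F *m invmx L) K^T.
pose Q := col_mx F^T (invmx (K *m K^T) *m K).
have hQP : Q *m P = 1%:M.
  rewrite /P /Q mul_col_row [RHS]scalar_mx_block.
  rewrite mulmxA -/L mulmxV // -trmx_mul hKF trmx0.
  rewrite -!mulmxA [K *m (F *m _)]mulmxA hKF mul0mx mulmx0.
  by rewrite mulVmx.
have hPu : P \in unitmx by case: (mulmx1_unit hQP).
exists erefl, P; split => //.
rewrite castmx_id.
suff hAP : laplacian eu ev w *m P = P *m block_mx (L *m RFC *m W *m RFC^T) 0 0 0.
  by rewrite -hAP mulmxK.
have e1 : F^T *m P = row_mx 1%:M 0.
  by rewrite /P mul_mx_row mulmxA -/L mulmxV // -trmx_mul hKF trmx0.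
rewrite /laplacian -/E -/W hE trmx_mul !mulmxA -[_ *m F^T *m P]mulmxA e1.
rewrite mul_mx_row mulmx1 mulmx0 /P mul_row_block !mulmx0 addr0.
by rewrite addr0 -!mulmxA [F^T *m (F *m _)]mulmxA -/L mulKmx.
Qed.
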